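(* For $s\in\mathcal S(0)$ and $\theta\in\Theta$ let $U_s(\theta)=\int_0^\theta s(x)\,dx+v(\theta)$ (the payoff of type $\theta$ under interim status $s$ when the lowest level is free and prices are nonnegative). Then $U_{1/2}(\theta)\ge U_s(\theta)$ for all $\theta\in\Theta$ and all $s\in\mathcal S(0)$ (where $U_{1/2}$ corresponds to $s\equiv\frac12$) if and only if $F(\theta)\le\theta/\bar\theta$ for all $\theta\in\Theta$. In particular, this holds whenever $f$ is nondecreasing on $\Theta$.
   Context: Let $0<\bar\theta<\infty$, $\Theta=[0,\bar\theta]$, $F$ a cdf on $\Theta$ with continuous, strictly positive density $f$, $dF=f\,d\theta$. The intrinsic value $v:\Theta\to[0,\infty)$ is differentiable. For bounded measurable $a,b$ on $\Theta$, write $b\in\mathrm{MPS}(a)$ if $\int_x^{\bar\theta}b\,dF\le\int_x^{\bar\theta}a\,dF$ for all $x\in\Theta$, with equality at $x=0$. $\mathcal S(0)$ is the set of nondecreasing $s:\Theta\to[0,1]$ with $s\in\mathrm{MPS}(F)$. *)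

(* Defs.v *)
From Stdlib Require Import Reals.
From Coquelicot Require Import Coquelicot.
Open Scope R_scope.

Definition inTheta (thbar x : R) : Prop := 0 <= x <= thbar.

Definition cont_on_Theta (thbar : R) (f : R -> R) : Prop :=
  forall x, inTheta thbar x ->
    filterlim f (within (inTheta thbar) (locally x)) (locally (f x)).

Definition diff_on_Theta (thbar : R) (v : R -> R) : Prop :=
  forall x, inTheta thbar x -> exists l : R,
    filterlim (fun y => (v y - v x) / (y - x))
      (within (fun y => inTheta thbar y /\ y <> x) (locally x)) (locally l).

Definition is_cdf_with_density (thbar : R) (F f : R -> R) : Prop :=
  (forall x, inTheta thbar x -> 0 < f x) /\
  cont_on_Theta thbar f /\
  (forall x, inTheta thbar x -> F x = RInt f 0 x) /\
  F thbar = 1.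

Definition MPS (thbar : R) (f b a : R -> R) : Prop :=
  (forall x, inTheta thbar x ->
     RInt (fun t => b t * f t) x thbar <= RInt (fun t => a t * f t) x thbar) /\
  RInt (fun t => b t * f t) 0 thbar = RInt (fun t => a t * f t) 0 thbar.

Definition S0 (thbar : R) (F f s : R -> R) : Prop :=
  (forall x, inTheta thbar x -> 0 <= s x <= 1) /\
  (forall x y, inTheta thbar x -> inTheta thbar y -> x <= y -> s x <= s y) /\
  MPS thbar f s F.

Definition U (v s : R -> R) (th : R) : R := RInt s 0 th + v th.

Definition half_fun : R -> R := fun _ => / 2.

(* Main.v *)
Require Import Defs.
From Stdlib Require Import Reals Lra.
From Coquelicot Require Import Coquelicot.
Open Scope R_scope.

Lemma ballR (x e y : R) : ball x e y <-> Rabs (y - x) < e.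
Proof. reflexivity. Qed.
Lemma scalR (a x : R) : scal a x = a * x.
Proof. reflexivity. Qed.

Lemma bracket_ex (f : R -> R) a b : a < b ->
  (forall eps, 0 < eps -> exists g k, ex_RInt g a b /\ ex_RInt k a b /\
     (forall x, a <= x <= b -> g x <= f x <= k x) /\ RInt k a b - RInt g a b <= eps) ->
  ex_RInt f a b.
Proof.
  intros Hab H.
  set (S := fun ptd => scal (sign (b - a)) (Riemann_sum f ptd)).
  set (Fl := filtermap S (Riemann_fine a b)).
  assert (PF : ProperFilter Fl).
  { apply filtermap_proper_filter. apply Riemann_fine_filter. }
  assert (Hs : sign (b - a) = 1) by (apply sign_eq_1; lra).
  assert (Hc : cauchy Fl).
  { intros eps.
    destruct (H (pos eps / 3)) as (g & k & Hg & Hk & Hb & Hd).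
    { destruct eps; simpl; lra. }
    exists (RInt g a b).
    destruct Hg as [Ig HIg]. destruct Hk as [Ik HIk].
    pose proof (is_RInt_unique _ _ _ _ HIg) as EG.
    pose proof (is_RInt_unique _ _ _ _ HIk) as EK.
    assert (e3 : 0 < pos eps / 3) by (destruct eps; simpl; lra).
    pose proof (HIg (ball Ig (mkposreal _ e3)) (locally_ball _ _)) as E1.
    pose proof (HIk (ball Ik (mkposreal _ e3)) (locally_ball _ _)) as E2.
    assert (E3 : Riemann_fine a b (fun ptd => pointed_subdiv ptd /\
        SF_h ptd = Rmin a b /\ seq.last (SF_h ptd) (SF_lx ptd) = Rmax a b)).
    { unfold Riemann_fine, within. apply filter_forall. auto. }
    unfold Fl, filtermap. unfold filtermap in E1, E2.
    generalize (filter_and _ _ E3 (filter_and _ _ E1 E2)).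
    apply filter_imp. intros ptd [[Hp [Hh Hl]] [B1 B2]].
    unfold filtermap in B1, B2 |- *.
    rewrite Hs in B1, B2. unfold S. rewrite Hs.
    rewrite Rmin_left in Hh by lra. rewrite Rmax_right in Hl by lra.
    assert (L1 : Riemann_sum g ptd <= Riemann_sum f ptd).
    { apply Riemann_sum_le; auto. intros t [H1 H2]. apply Hb; split; [rewrite <- Hh; exact H1 | rewrite <- Hl; exact H2]. }
    assert (L2 : Riemann_sum f ptd <= Riemann_sum k ptd).
    { apply Riemann_sum_le; auto. intros t [H1 H2]. apply Hb; split; [rewrite <- Hh; exact H1 | rewrite <- Hl; exact H2]. }
    apply ballR in B1. apply ballR in B2. apply ballR.
    rewrite !scalR, !Rmult_1_l in *.
    rewrite EG, EK in Hd. rewrite EG.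
    change (Rabs (Riemann_sum g ptd - Ig) < eps/3) in B1. change (Rabs (Riemann_sum k ptd - Ik) < eps/3) in B2. apply Rabs_def1; apply Rabs_def2 in B1; apply Rabs_def2 in B2; lra. }
  exists (lim Fl).
  intros P [eps HP].
  apply (filter_imp (ball (lim Fl) eps)); auto.
  apply complete_cauchy; auto.
Qed.



Lemma ext_in (u w : R -> R) a c : a <= c -> (forall x, a < x < c -> w x = u x) ->
  forall x, Rmin a c < x < Rmax a c -> u x = w x.
Proof. intros H E x Hx. rewrite Rmin_left, Rmax_right in Hx by lra. symmetry; auto. Qed.

Lemma glue (u v w : R -> R) a c d : a <= c -> c <= d -> ex_RInt u a c -> ex_RInt v c d ->
  (forall x, a < x < c -> w x = u x) -> (forall x, c < x < d -> w x = v x) ->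
  ex_RInt w a d /\ RInt w a d = RInt u a c + RInt v c d.
Proof.
  intros h1 h2 eu ev E1 E2.
  assert (i1 : is_RInt w a c (RInt u a c)).
  { apply is_RInt_ext with u. apply ext_in; auto. first [exact (RInt_correct _ _ _ eu) | exact (RInt_correct _ _ _ ev)]. }
  assert (i2 : is_RInt w c d (RInt v c d)).
  { apply is_RInt_ext with v. apply ext_in; auto. first [exact (RInt_correct _ _ _ eu) | exact (RInt_correct _ _ _ ev)]. }
  pose proof (is_RInt_Chasles _ _ _ _ _ _ i1 i2) as i3.
  split. eexists; eauto. rewrite (is_RInt_unique (V:=R_CompleteNormedModule) _ _ _ _ i3). reflexivity.
Qed.

Lemma const_mul_int (psi : R -> R) (cst : R) c d l : is_RInt psi c d l ->
  is_RInt (fun x => cst * psi x) c d (cst * l).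
Proof. intro H. apply (is_RInt_scal _ _ _ cst) in H. exact H. Qed.

Lemma steps (s psi G : R -> R) (T h : R) :
  0 < h ->
  (forall x y, 0 <= x -> x <= y -> y <= T -> s x <= s y) ->
  (forall x, 0 <= x <= T -> G x <= 0) ->
  (forall c d, 0 <= c -> c <= d -> d <= T -> is_RInt psi c d (G d - G c)) ->
  (forall x, continuous psi x) ->
  forall n : nat, INR n * h <= T ->
  exists g k : R -> R,
    (forall x, 0 <= x <= INR n * h -> g x <= s x <= k x) /\
    (forall phi, (forall x, continuous phi x) ->
       ex_RInt (fun x => g x * phi x) 0 (INR n * h) /\
       ex_RInt (fun x => k x * phi x) 0 (INR n * h)) /\
    ex_RInt g 0 (INR n*h) /\ ex_RInt k 0 (INR n*h) /\
    RInt k 0 (INR n * h) - RInt g 0 (INR n * h) <= h * (s (INR n * h) - s 0) /\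
    s (INR n * h) * G (INR n * h) - s 0 * G 0 <= RInt (fun x => g x * psi x) 0 (INR n * h).
Proof.
  intros hp smon Gneg HG psic n. induction n as [|n IH]; intros Hn.
  - exists s, s. simpl INR. rewrite Rmult_0_l.
    split; [intros; lra|]. split; [intros; split; apply ex_RInt_point|].
    split; [apply ex_RInt_point|]. split; [apply ex_RInt_point|].
    rewrite !RInt_point. unfold zero; simpl. split; lra.
  - assert (Hn0 := pos_INR n).
    replace (INR (S n) * h) with (INR n * h + h) in * by (rewrite S_INR; ring).
    set (c := INR n * h) in *. set (d := c + h) in *.
    assert (c0 : 0 <= c) by (unfold c; nra).
    destruct (IH ltac:(unfold d in Hn; lra)) as (g & k & Hb & Hphi & eg & ek & Hd & Ha).
    exists (fun x => if Rle_dec x c then g x else s c).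
    exists (fun x => if Rle_dec x c then k x else s d).
    assert (Ex1 : forall (u : R -> R) v phi, forall x, 0 < x < c ->
      (if Rle_dec x c then u x else v) * phi x = u x * phi x).
    { intros u v phi x Hx. destruct Rle_dec; [reflexivity | lra]. }
    assert (Ex2 : forall (u : R -> R) v phi, forall x, c < x < d ->
      (if Rle_dec x c then u x else v) * phi x = v * phi x).
    { intros u v phi x Hx. destruct Rle_dec; [lra | reflexivity]. }
    assert (Ey1 : forall (u : R -> R) v, forall x, 0 < x < c ->
      (if Rle_dec x c then u x else v) = u x).
    { intros u v x Hx. destruct Rle_dec; [reflexivity | lra]. }
    assert (Ey2 : forall (u : R -> R) v, forall x, c < x < d ->
      (if Rle_dec x c then u x else v) = v).
    { intros u v x Hx. destruct Rle_dec; [lra | reflexivity]. }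
    assert (cd : c <= d) by (unfold d; lra).
    assert (Tcst : forall v : R, ex_RInt (fun _ => v) c d) by (intros; apply ex_RInt_const).
    assert (Tcm : forall (v : R) phi, (forall x, continuous phi x) ->
        ex_RInt (fun x => v * phi x) c d).
    { intros v phi Hp. apply (ex_RInt_continuous (V:=R_CompleteNormedModule)). intros z _.
      apply (continuous_mult (fun _ => v) phi); [apply continuous_const | auto]. }
    split.
    { intros x Hx. destruct Rle_dec as [Hxc|Hxc].
      - apply Hb; lra.
      - split; apply smon; lra. }
    split.
    { intros phi Hp. destruct (Hphi phi Hp) as [p1 p2]. split.
      - eapply glue; [ | | exact p1 | apply (Tcm (s c) phi Hp) | apply Ex1 | apply Ex2]; lra.
      - eapply glue; [ | | exact p2 | apply (Tcm (s d) phi Hp) | apply Ex1 | apply Ex2]; lra. }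
    destruct (glue g (fun _ => s c) (fun x => if Rle_dec x c then g x else s c) 0 c d
       c0 cd eg (Tcst _) (Ey1 _ _) (Ey2 _ _)) as [G1 G2].
    destruct (glue k (fun _ => s d) (fun x => if Rle_dec x c then k x else s d) 0 c d
       c0 cd ek (Tcst _) (Ey1 _ _) (Ey2 _ _)) as [K1 K2].
    split; [exact G1|]. split; [exact K1|].
    split.
    { rewrite G2, K2, !RInt_const. unfold scal; simpl; unfold mult; simpl.
      assert (s c <= s d) by (apply smon; unfold d in *; lra).
      unfold d in *. nra. }
    { assert (Hi : is_RInt (fun x => s c * psi x) c d (s c * (G d - G c))).
      { apply const_mul_int. apply HG; lra. }
      assert (ep : ex_RInt (fun x => g x * psi x) 0 c) by (apply Hphi; auto).
      destruct (glue (fun x => g x * psi x) (fun x => s c * psi x)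
         (fun x => (if Rle_dec x c then g x else s c) * psi x) 0 c d c0 cd ep
         (ex_intro _ _ Hi) (Ex1 _ _ _) (Ex2 _ _ _)) as [_ P2].
      rewrite P2. rewrite (is_RInt_unique _ _ _ _ Hi).
      assert (s c <= s d) by (apply smon; unfold d in *; lra).
      assert (G d <= 0) by (apply Gneg; unfold d in *; lra).
      nra. }
Qed.


Lemma clamp_lip (T x y : R) : 0 <= T ->
  Rabs (Rmax 0 (Rmin y T) - Rmax 0 (Rmin x T)) <= Rabs (y - x).
Proof.
  intros HT. unfold Rmax, Rmin.
  repeat destruct Rle_dec; unfold Rabs; repeat destruct Rcase_abs; lra.
Qed.

Lemma clamp_in (T x : R) : 0 <= T -> inTheta T (Rmax 0 (Rmin x T)).
Proof. intros HT. unfold inTheta, Rmax, Rmin. repeat destruct Rle_dec; lra. Qed.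

Lemma clamp_id (T x : R) : inTheta T x -> Rmax 0 (Rmin x T) = x.
Proof. unfold inTheta, Rmax, Rmin. intros. repeat destruct Rle_dec; lra. Qed.

Lemma ft_cont (T : R) (f : R -> R) : 0 <= T -> cont_on_Theta T f ->
  forall x, continuous (fun y => f (Rmax 0 (Rmin y T))) x.
Proof.
  intros HT Hc x.
  unfold continuous.
  eapply filterlim_comp; [ | apply (Hc _ (clamp_in T x HT))].
  intros P [eps HP]. unfold filtermap.
  exists eps. intros y Hy. apply HP; [ | apply clamp_in; auto].
  change (Rabs (Rmax 0 (Rmin y T) - Rmax 0 (Rmin x T)) < eps).
  eapply Rle_lt_trans; [apply clamp_lip; auto | exact Hy].
Qed.


Lemma exC1 (w : R -> R) a b c : a <= b <= c -> ex_RInt w a c -> ex_RInt w a b.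
Proof. intros. apply (ex_RInt_Chasles_1 (V:=R_CompleteNormedModule) w a b c); auto. Qed.
Lemma exC2 (w : R -> R) a b c : a <= b <= c -> ex_RInt w a c -> ex_RInt w b c.
Proof. intros. apply (ex_RInt_Chasles_2 (V:=R_CompleteNormedModule) w a b c); auto. Qed.
Lemma exCont (w : R -> R) a b : (forall x, continuous w x) -> ex_RInt w a b.
Proof. intros. apply (ex_RInt_continuous (V:=R_CompleteNormedModule)). auto. Qed.
Lemma RIcorr (w : R -> R) a b : ex_RInt w a b -> is_RInt w a b (RInt w a b).
Proof. intros H. exact (RInt_correct (V:=R_CompleteNormedModule) w a b H). Qed.
Lemma RIuniq (w : R -> R) a b l : is_RInt w a b l -> RInt w a b = l.
Proof. intros H. exact (is_RInt_unique (V:=R_CompleteNormedModule) w a b l H). Qed.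
Lemma RIChasles (w : R -> R) a b c : ex_RInt w a b -> ex_RInt w b c ->
  RInt w a c = RInt w a b + RInt w b c.
Proof. intros H1 H2. rewrite <- (RInt_Chasles (V:=R_CompleteNormedModule) w a b c H1 H2). reflexivity. Qed.
Lemma RIconst a b (v : R) : RInt (fun _ => v) a b = (b - a) * v.
Proof. rewrite (RInt_const (V:=R_CompleteNormedModule)). reflexivity. Qed.

Lemma cheb (w : R -> R) T th : 0 < T -> 0 <= th <= T ->
  (forall x y, 0 <= x -> x <= y -> y <= T -> w x <= w y) -> ex_RInt w 0 T ->
  RInt w 0 th * T <= th * RInt w 0 T.
Proof.
  intros HT Hth Hw Hex.
  assert (e1 : ex_RInt w 0 th) by (apply (exC1 _ 0 th T); auto; lra).
  assert (e2 : ex_RInt w th T) by (apply (exC2 _ 0 th T); auto; lra).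
  assert (A : RInt w 0 th <= th * w th).
  { eapply Rle_trans; [apply (RInt_le w (fun _ => w th)); try lra; auto |].
    apply ex_RInt_const. intros x Hx. apply Hw; lra.
    rewrite RIconst. lra. }
  assert (B : (T - th) * w th <= RInt w th T).
  { eapply Rle_trans; [| apply (RInt_le (fun _ => w th) w); try lra; auto ].
    rewrite RIconst. lra.
    apply ex_RInt_const. intros x Hx. apply Hw; lra. }
  assert (C : RInt w 0 T = RInt w 0 th + RInt w th T).
  { apply RIChasles; auto. }
  rewrite C. nra.
Qed.

Ltac req := match goal with |- ?a = ?b => change (@eq R a b) end.

Lemma RI_scal (w : R -> R) a b c : ex_RInt w a b ->
  ex_RInt (fun x => c * w x) a b /\ RInt (fun x => c * w x) a b = c * RInt w a b.
Proof.
  intros H. pose proof (const_mul_int w c a b _ (RIcorr _ _ _ H)) as I.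
  split. eexists; eauto. apply RIuniq; auto.
Qed.

Lemma RI_minus (w1 w2 : R -> R) a b : ex_RInt w1 a b -> ex_RInt w2 a b ->
  ex_RInt (fun x => w1 x - w2 x) a b /\
  RInt (fun x => w1 x - w2 x) a b = RInt w1 a b - RInt w2 a b.
Proof.
  intros H1 H2.
  pose proof (is_RInt_minus (V:=R_NormedModule) _ _ _ _ _ _ (RIcorr _ _ _ H1) (RIcorr _ _ _ H2)) as I.
  split. eexists; exact I. apply RIuniq. exact I.
Qed.

Lemma RI_lin_le a b (f1 f2 g1 g2 : R -> R) : a <= b ->
  ex_RInt f1 a b -> ex_RInt f2 a b -> ex_RInt g1 a b -> ex_RInt g2 a b ->
  (forall x, a < x < b -> f1 x - f2 x <= g1 x - g2 x) ->
  RInt f1 a b - RInt f2 a b <= RInt g1 a b - RInt g2 a b.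
Proof.
  intros Hab e1 e2 e3 e4 H.
  destruct (RI_minus f1 f2 a b e1 e2) as [x1 E1].
  destruct (RI_minus g1 g2 a b e3 e4) as [x2 E2].
  rewrite <- E1, <- E2. apply RInt_le; auto.
Qed.

Theorem mainTheorem16 (thbar : R) (F f v : R -> R) :
  0 < thbar ->
  is_cdf_with_density thbar F f ->
  (forall x, inTheta thbar x -> 0 <= v x) ->
  diff_on_Theta thbar v ->
  ((forall th, inTheta thbar th -> forall s, S0 thbar F f s ->
       U v s th <= U v half_fun th)
   <-> (forall th, inTheta thbar th -> F th <= th / thbar))
  /\
  ((forall x y, inTheta thbar x -> inTheta thbar y -> x <= y -> f x <= f y) ->
   forall th, inTheta thbar th -> F th <= th / thbar).
Proof.
  intros HT [fpos [fcont [Fdef F1]]] vnn vdiff.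
  set (ft := fun y => f (Rmax 0 (Rmin y thbar))).
  set (Ft := fun x => RInt ft 0 x).
  assert (HT0 : 0 <= thbar) by lra.
  assert (ftc : forall x, continuous ft x) by (apply ft_cont; auto).
  assert (ftp : forall x, 0 < ft x) by (intros; apply fpos, clamp_in; auto).
  assert (fte : forall x, inTheta thbar x -> ft x = f x)
    by (intros x Hx; unfold ft; rewrite clamp_id; auto).
  assert (ftex : forall a b, ex_RInt ft a b) by (intros; apply exCont; auto).
  assert (Ftd : forall x, is_derive Ft x (ft x)).
  { intros x. apply (is_derive_RInt (V:=R_NormedModule) ft Ft 0).
    apply filter_forall. intros b. apply RIcorr, ftex. apply ftc. }
  assert (Ftint : forall p q, is_RInt ft p q (Ft q - Ft p)).
  { intros p q. exact (is_RInt_derive (V:=R_CompleteNormedModule) Ft ft p q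
      (fun x _ => Ftd x) (fun x _ => ftc x)). }
  assert (Fe : forall x, inTheta thbar x -> F x = Ft x).
  { intros x Hx. rewrite Fdef by auto. unfold Ft. apply RInt_ext.
    intros t Ht. unfold inTheta in Hx. rewrite Rmin_left, Rmax_right in Ht by lra.
    symmetry. apply fte. unfold inTheta. lra. }
  assert (Ft0 : Ft 0 = 0) by (unfold Ft; rewrite RInt_point; reflexivity).
  assert (Ft1 : Ft thbar = 1) by (rewrite <- Fe; auto; unfold inTheta; lra).
  assert (Ftmon : forall p q, p <= q -> Ft p <= Ft q).
  { intros p q H. assert (H0 : 0 <= RInt ft p q).
    { apply RInt_ge_0; auto. intros; left; auto. }
    rewrite (RIuniq _ _ _ _ (Ftint p q)) in H0. lra. }
  assert (Ftc : forall x, continuous Ft x)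
    by (intros; apply (ex_derive_continuous (K:=R_AbsRing) (V:=R_NormedModule) Ft); eexists; apply Ftd).
  assert (K1 : forall x, inTheta thbar x ->
     RInt (fun t => F t * f t) x thbar = (1 - Ft x * Ft x) / 2).
  { intros x Hx.
    rewrite (RInt_ext _ (fun t => Ft t * ft t)).
    2: { intros t Ht. destruct Hx. rewrite Rmin_left, Rmax_right in Ht by lra.
         rewrite Fe, fte; auto; unfold inTheta; lra. }
    apply RIuniq.
    assert (D : forall t, is_derive (fun t => /2 * (Ft t * Ft t)) t (Ft t * ft t)).
    { intros t.
      pose proof (is_derive_scal _ t (/2) _
        (is_derive_mult Ft Ft t _ _ (Ftd t) (Ftd t) (fun n m => Rmult_comm n m))) as H.
      replace (Ft t * ft t) with (/ 2 * (plus (mult (ft t) (Ft t)) (mult (Ft t) (ft t)))).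
      exact H. unfold plus, mult; simpl. field. }
    pose proof (is_RInt_derive (V:=R_CompleteNormedModule) _ _ x thbar (fun t _ => D t)
      (fun t _ => continuous_mult Ft ft t (Ftc t) (ftc t))) as I.
    replace ((1 - Ft x * Ft x) / 2) with
       (minus (/2 * (Ft thbar * Ft thbar)) (/2 * (Ft x * Ft x))). exact I.
    rewrite Ft1. unfold minus, plus, opp; simpl. field. }
  assert (Pc : forall (w : R -> R) c p q, 0 <= p -> p <= q -> q <= thbar ->
     (forall t, p < t < q -> w t = c) ->
     ex_RInt (fun t => w t * f t) p q /\
     RInt (fun t => w t * f t) p q = c * (Ft q - Ft p)).
  { intros w c p q h1 h2 h3 Hw.
    assert (I : is_RInt (fun t => w t * f t) p q (c * (Ft q - Ft p))).
    { apply is_RInt_ext with (fun t => c * ft t).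
      intros t Ht. rewrite Rmin_left, Rmax_right in Ht by lra.
      rewrite Hw by lra. rewrite fte; auto. unfold inTheta; lra.
      apply const_mul_int. apply Ftint. }
    split. eexists; eauto. apply RIuniq; auto. }
  assert (Pc0 : forall (w : R -> R) c p q, p <= q ->
     (forall t, p < t < q -> w t = c) ->
     ex_RInt w p q /\ RInt w p q = c * (q - p)).
  { intros w c p q h2 Hw.
    assert (I : is_RInt w p q (c * (q - p))).
    { apply is_RInt_ext with (fun _ => c).
      intros t Ht. rewrite Rmin_left, Rmax_right in Ht by lra. rewrite Hw by lra; auto.
      replace (c * (q - p)) with (scal (q - p) c).
      apply (is_RInt_const (V:=R_NormedModule)). unfold scal; simpl; unfold mult; simpl. ring. }
    split. eexists; eauto. apply RIuniq; auto. }
  assert (Fr : forall x, inTheta thbar x -> 0 <= Ft x <= 1).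
  { intros x [h1 h2]. split; [rewrite <- Ft0 | rewrite <- Ft1]; apply Ftmon; lra. }
  assert (Hhalf : forall th, @eq R (RInt half_fun 0 th) (th / 2)).
  { intros th. unfold half_fun. rewrite RIconst. field. }
  split; [split|].
  -
    intros H th0 Hth0.
    rewrite Fe by auto.
    destruct (Rle_dec (Ft th0) (th0 / thbar)) as [ok|no]; auto. exfalso.
    apply Rnot_le_lt in no.
    set (F0 := Ft th0) in *.
    assert (F0r : 0 <= F0 <= 1) by (apply Fr; auto).
    destruct Hth0 as [t1 t2].
    assert (th0pos : 0 < th0).
    { destruct t1 as [|E]; auto. subst th0. unfold F0 in no. rewrite Ft0 in no.
      unfold Rdiv in no. lra. }
    set (s := fun x => if Rlt_dec x th0 then F0 / 2 else (1 + F0) / 2).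
    assert (sL : forall t, t < th0 -> s t = F0 / 2)
      by (intros t Ht; unfold s; destruct Rlt_dec; lra).
    assert (sR : forall t, th0 < t -> s t = (1 + F0) / 2)
      by (intros t Ht; unfold s; destruct Rlt_dec; lra).
    assert (HS : S0 thbar F f s).
    { split; [|split].
      - intros x _; unfold s; destruct Rlt_dec; lra.
      - intros x y _ _ Hxy; unfold s; repeat destruct Rlt_dec; lra.
      - split.
        + intros x Hx. rewrite K1 by auto. pose proof (Fr x Hx) as Frx.
          destruct Hx as [x1 x2].
          destruct (Rlt_dec x th0) as [Hx|Hx].
          * destruct (Pc s (F0/2) x th0 ltac:(lra) ltac:(lra) ltac:(lra)
              ltac:(intros; apply sL; lra)) as [e1 E1].
            destruct (Pc s ((1+F0)/2) th0 thbar ltac:(lra) ltac:(lra) ltac:(lra)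
              ltac:(intros; apply sR; lra)) as [e2 E2].
            rewrite (RIChasles _ _ _ _ e1 e2), E1, E2, Ft1.
            assert (Ft x <= F0) by (apply Ftmon; lra). change (Ft th0) with F0.
            assert (0 <= Ft x * (F0 - Ft x)) by (apply Rmult_le_pos; lra). nra.
          * destruct (Pc s ((1+F0)/2) x thbar ltac:(lra) ltac:(lra) ltac:(lra)
              ltac:(intros; apply sR; lra)) as [e2 E2].
            rewrite E2, Ft1.
            assert (F0 <= Ft x) by (apply Ftmon; lra).
            assert (0 <= (1 - Ft x) * (Ft x - F0)) by (apply Rmult_le_pos; lra). nra.
        + rewrite K1 by (unfold inTheta; lra). rewrite Ft0.
          destruct (Pc s (F0/2) 0 th0 ltac:(lra) ltac:(lra) ltac:(lra)
              ltac:(intros; apply sL; lra)) as [e1 E1].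
          destruct (Pc s ((1+F0)/2) th0 thbar ltac:(lra) ltac:(lra) ltac:(lra)
              ltac:(intros; apply sR; lra)) as [e2 E2].
          rewrite (RIChasles _ _ _ _ e1 e2), E1, E2, Ft1, Ft0. change (Ft th0) with F0. match goal with |- ?a = ?b => change (@eq R a b) end. field. }
    pose proof (H thbar ltac:(unfold inTheta; lra) s HS) as Hu.
    unfold U in Hu. rewrite Hhalf in Hu.
    destruct (Pc0 s (F0/2) 0 th0 ltac:(lra) ltac:(intros; apply sL; lra)) as [e1 E1].
    destruct (Pc0 s ((1+F0)/2) th0 thbar ltac:(lra) ltac:(intros; apply sR; lra)) as [e2 E2].
    rewrite (RIChasles _ _ _ _ e1 e2), E1, E2 in Hu.
    assert (E : th0 = th0 / thbar * thbar) by (field; lra).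
    nra.
  -
    intros Hle th Hth s [s01 [smon [Smps Seq]]].
    unfold U. apply Rplus_le_compat_r. rewrite Hhalf.
    assert (smon' : forall x y, 0 <= x -> x <= y -> y <= thbar -> s x <= s y).
    { intros x y h1 h2 h3. apply smon; unfold inTheta; lra. }
    set (G := fun x => Ft x - x / thbar).
    set (psi := fun x => ft x - / thbar).
    assert (Gneg : forall x, 0 <= x <= thbar -> G x <= 0).
    { intros x Hx. unfold G. rewrite <- Fe by auto. pose proof (Hle x Hx). lra. }
    assert (HG : forall c d, 0 <= c -> c <= d -> d <= thbar -> is_RInt psi c d (G d - G c)).
    { intros c d _ _ _.
      pose proof (is_RInt_minus (V:=R_NormedModule) _ _ _ _ _ _ (Ftint c d)
         (is_RInt_const (V:=R_NormedModule) c d (/ thbar))) as I.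
      replace (G d - G c) with (minus (Ft d - Ft c) (scal (d - c) (/ thbar))).
      exact I. unfold G, minus, plus, opp, scal; simpl; unfold mult; simpl. field. lra. }
    assert (psic : forall x, continuous psi x).
    { intros x. apply (continuous_minus ft (fun _ => / thbar)); auto. apply continuous_const. }
    destruct (ex_RInt_ub (V:=R_NormedModule) psi 0 thbar (exCont _ _ _ psic)) as [Mp HMp].
    destruct (ex_RInt_ub (V:=R_NormedModule) ft 0 thbar (ftex _ _)) as [Mf HMf].
    rewrite Rmin_left, Rmax_right in HMp, HMf by lra.
    assert (Mp0 : 0 <= Mp).
    { pose proof (HMp 0 ltac:(lra)). eapply Rle_trans; [apply Rabs_pos|]. exact H. }
    assert (Mf0 : 0 <= Mf).
    { pose proof (HMf 0 ltac:(lra)). eapply Rle_trans; [apply Rabs_pos|]. exact H. }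
    assert (Nh : forall eps, 0 < eps -> exists N h, 0 < h /\ INR N * h = thbar /\ h < eps).
    { intros eps Heps. destruct (archimed_cor1 (eps / thbar)) as [N [HN1 HN2]].
      apply Rdiv_lt_0_compat; lra.
      apply lt_0_INR in HN2. exists N, (thbar / INR N). split; [|split].
      apply Rdiv_lt_0_compat; lra. field; lra.
      apply (Rmult_lt_compat_l thbar) in HN1; auto.
      unfold Rdiv in *. replace (thbar * (eps * / thbar)) with eps in HN1 by (field; lra). lra. }
    assert (intlem : forall w Mw, (forall x, continuous w x) ->
        (forall x, 0 <= x <= thbar -> 0 <= w x <= Mw) ->
        ex_RInt (fun x => s x * w x) 0 thbar).
    { intros w Mw wc wb. apply bracket_ex; auto.
      intros eps Heps.
      assert (Mw0 : 0 <= Mw) by (pose proof (wb 0 ltac:(lra)); lra).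
      destruct (Nh (eps / (Mw + 1))) as (N & h & hp & HNh & Hh).
      apply Rdiv_lt_0_compat; lra.
      destruct (steps s psi G thbar h hp smon' Gneg HG psic N ltac:(lra))
        as (g & k & Hb & Hphi & eg & ek & Hd & Ha).
      rewrite HNh in Hb, Hphi, eg, ek, Hd, Ha.
      destruct (Hphi w wc) as [ew1 ew2].
      exists (fun x => g x * w x), (fun x => k x * w x).
      split; [auto|]. split; [auto|]. split.
      { intros x Hx. destruct (Hb x Hx). destruct (wb x Hx).
        split; apply Rmult_le_compat_r; lra. }
      destruct (RI_scal k 0 thbar Mw ek) as [ek' Ek].
      destruct (RI_scal g 0 thbar Mw eg) as [eg' Eg].
      pose proof (RI_lin_le 0 thbar (fun x => k x * w x) (fun x => g x * w x)
        (fun x => Mw * k x) (fun x => Mw * g x) HT0 ew2 ew1 ek' eg') as L.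
      rewrite Ek, Eg in L.
      assert (L2 : RInt (fun x => k x * w x) 0 thbar - RInt (fun x => g x * w x) 0 thbar
        <= Mw * RInt k 0 thbar - Mw * RInt g 0 thbar).
      { apply L. intros x Hx. destruct (Hb x ltac:(lra)). destruct (wb x ltac:(lra)). nra. }
      assert (S1 : s thbar - s 0 <= 1).
      { pose proof (s01 thbar ltac:(unfold inTheta; lra)).
        pose proof (s01 0 ltac:(unfold inTheta; lra)). lra. }
      assert (S2 : 0 <= s thbar - s 0) by (pose proof (smon' 0 thbar ltac:(lra) ltac:(lra) ltac:(lra)); lra).
      assert (h * (Mw + 1) < eps).
      { apply (Rmult_lt_compat_r (Mw + 1)) in Hh; [|lra].
        unfold Rdiv in Hh. rewrite Rmult_assoc, Rinv_l in Hh by lra. lra. }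
      nra. }
    assert (es : ex_RInt s 0 thbar).
    { apply ex_RInt_ext with (fun x => s x * 1).
      intros; req; ring. apply (intlem (fun _ => 1) 1). intros; apply continuous_const.
      intros; lra. }
    assert (esf : ex_RInt (fun x => s x * ft x) 0 thbar).
    { apply (intlem ft Mf ftc). intros x Hx. split. left; auto.
      pose proof (HMf x Hx). eapply Rle_trans; [apply Rle_abs | exact H]. }
    assert (Isf : RInt (fun x => s x * ft x) 0 thbar = 1 / 2).
    { rewrite (RInt_ext _ (fun x => s x * f x)).
      2: { intros x Hx. rewrite Rmin_left, Rmax_right in Hx by lra.
           rewrite fte; auto. unfold inTheta; lra. }
      rewrite Seq. rewrite K1 by (unfold inTheta; lra). rewrite Ft0. req; field. }
    destruct (RI_scal s 0 thbar (/ thbar) es) as [es' Es].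
    destruct (RI_minus _ _ 0 thbar esf es') as [esp Esp].
    assert (Ipsi : RInt (fun x => s x * psi x) 0 thbar = 1 / 2 - / thbar * RInt s 0 thbar).
    { rewrite <- Isf, <- Es, <- Esp. apply RInt_ext. intros. unfold psi. req; ring. }
    assert (esp' : ex_RInt (fun x => s x * psi x) 0 thbar).
    { apply ex_RInt_ext with (fun x => s x * ft x - / thbar * s x); auto.
      intros. unfold psi. req; ring. }
    assert (Pos : 0 <= RInt (fun x => s x * psi x) 0 thbar).
    { destruct (Rle_dec 0 (RInt (fun x => s x * psi x) 0 thbar)) as [ok|no]; auto.
      exfalso. apply Rnot_le_lt in no.
      set (dl := - RInt (fun x => s x * psi x) 0 thbar) in *.
      destruct (Nh (dl / (Mp + 1))) as (N & h & hp & HNh & Hh).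
      apply Rdiv_lt_0_compat; unfold dl; lra.
      destruct (steps s psi G thbar h hp smon' Gneg HG psic N ltac:(lra))
        as (g & k & Hb & Hphi & eg & ek & Hd & Ha).
      rewrite HNh in Hb, Hphi, eg, ek, Hd, Ha.
      destruct (Hphi psi psic) as [ew1 ew2].
      destruct (RI_scal k 0 thbar Mp ek) as [ek' Ek].
      destruct (RI_scal g 0 thbar Mp eg) as [eg' Eg].
      pose proof (RI_lin_le 0 thbar (fun x => g x * psi x) (fun x => s x * psi x)
        (fun x => Mp * k x) (fun x => Mp * g x) HT0 ew1 esp' ek' eg') as L.
      rewrite Ek, Eg in L.
      assert (L2 : RInt (fun x => g x * psi x) 0 thbar - RInt (fun x => s x * psi x) 0 thbar
        <= Mp * RInt k 0 thbar - Mp * RInt g 0 thbar).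
      { apply L. intros x Hx. destruct (Hb x ltac:(lra)).
        pose proof (HMp x ltac:(lra)) as Hm. apply Rabs_le_between in Hm. nra. }
      assert (GT : G thbar = 0) by (unfold G; rewrite Ft1; field; lra).
      assert (G0 : G 0 = 0) by (unfold G; rewrite Ft0; field; lra).
      rewrite GT, G0 in Ha.
      assert (S1 : s thbar - s 0 <= 1).
      { pose proof (s01 thbar ltac:(unfold inTheta; lra)).
        pose proof (s01 0 ltac:(unfold inTheta; lra)). lra. }
      assert (S2 : 0 <= s thbar - s 0) by (pose proof (smon' 0 thbar ltac:(lra) ltac:(lra) ltac:(lra)); lra).
      assert (h * (Mp + 1) < dl).
      { apply (Rmult_lt_compat_r (Mp + 1)) in Hh; [|lra].
        unfold Rdiv in Hh. rewrite Rmult_assoc, Rinv_l in Hh by lra. lra. }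
      unfold dl in *.
      assert (Mp * (RInt k 0 thbar - RInt g 0 thbar) <= Mp * (h * (s thbar - s 0)))
        by (apply Rmult_le_compat_l; lra).
      assert (Mp * (h * (s thbar - s 0)) <= Mp * h)
        by (rewrite <- (Rmult_1_r (Mp * h)), <- Rmult_assoc; apply Rmult_le_compat_l; [apply Rmult_le_pos|]; lra).
      nra. }
    assert (Half : RInt s 0 thbar <= thbar / 2).
    { rewrite Ipsi in Pos.
      apply (Rmult_le_compat_l thbar) in Pos; [|lra].
      replace (thbar * (1 / 2 - / thbar * RInt s 0 thbar)) with
        (thbar / 2 - RInt s 0 thbar) in Pos by (field; lra). lra. }
    pose proof (cheb s thbar th HT Hth smon' es) as Ch.
    destruct Hth.
    assert (RInt s 0 th * thbar <= th / 2 * thbar) by nra.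
    apply Rmult_le_reg_r with thbar; lra.
  - intros fmon th Hth.
    rewrite Fe by auto.
    assert (ftm : forall x y, 0 <= x -> x <= y -> y <= thbar -> ft x <= ft y).
    { intros x y h1 h2 h3. rewrite !fte by (unfold inTheta; lra).
      apply fmon; unfold inTheta; lra. }
    pose proof (cheb ft thbar th HT Hth ftm (ftex _ _)) as Ch.
    fold (Ft th) in Ch. unfold Ft in Ch. fold (Ft thbar) in Ch. rewrite Ft1 in Ch.
    unfold Ft. apply Rmult_le_reg_r with thbar; auto.
    unfold Rdiv. rewrite Rmult_assoc, Rinv_l by lra. lra.
Qed.
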